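(* Consider the parallel-links routing game described in the context in which all users have equal demands $r^i=R/N$ for every $i$, and the costs are $J^i(\mathbf f)=\sum_l f^i_lT_l(f_l)$ with each $T_l:[0,\infty)\to[0,\infty)$ strictly increasing, convex and continuously differentiable. Then: (1) there is at most one cost vector $\tilde{\mathbf g}\in\mathcal G$ satisfying both Pareto optimality (N2) and Symmetry (N3); (2) $PoS=1$; moreover the NBS cost vector is the cost vector of a single feasible routing profile whose link totals are system-optimal (so the NBS outcome is socially optimal with probability $1$).
   Context: Parallel-links routing game: users $\mathcal N=\{1,\dots,N\}$ share parallel links $\mathcal L=\{1,\dots,L\}$ from a common source to a common destination. User $i$ has demand $r^i>0$, $R=\sum_ir^i$. A routing strategy of user $i$ is $\mathbf f^i=(f^i_l)_{l}$ with $f^i_l\ge0$, $\sum_lf^i_l=r^i$; feasible profiles $\mathbf f=(\mathbf f^1,\dots,\mathbf f^N)$ form the set $\mathbf F$; $f_l=\sum_if^i_l$. NEP: a feasible $\hat{\mathbf f}$ such that each $\hat{\mathbf f}^i$ minimizes $J^i$ over user $i$'s feasible strategies given the others'; it exists and is unique. $\hat J^i=J^i(\hat{\mathbf f})$. Social cost $J_{sys}(\mathbf f)=\sum_iJ^i(\mathbf f)=\sum_lf_lT_l(f_l)$; $J^*_{sys}$ its minimum over $\mathbf F$, attained at system-optimal link flows $(f^*_l)$. Bargaining: $\mathcal G$ is the set of all vectors $\sum_{m=1}^Mp_m(J^1(\mathbf f(m)),\dots,J^N(\mathbf f(m)))$ with $M$ finite, $p_m>0$, $\sum_mp_m=1$,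 $\mathbf f(m)\in\mathbf F$. Axiom N2 (Pareto optimality) for $\tilde{\mathbf g}\in\mathcal G$: there is no $\mathbf g\in\mathcal G$ with $g^i\le\tilde g^i$ for all $i$ and $g^i<\tilde g^i$ for some $i$. Axiom N3 (Symmetry): for any users $i,k$, if $\hat J^i=\hat J^k$ and $\mathcal G$ is invariant under swapping coordinates $i$ and $k$, then $\tilde g^i=\tilde g^k$. The NBS is the unique $\tilde{\mathbf g}$ maximizing $\prod_i(\hat J^i-g^i)$ over $\mathbf g\in\mathcal G$ with $g^i\le\hat J^i$ for all $i$. $PoS=(\sum_i\tilde g^i)/J^*_{sys}$. *)

(* Defs.v *)
From HB Require Import structures.
From mathcomp Require Import all_boot all_order all_algebra.
From mathcomp Require Import reals.
Set Implicit Arguments. Unset Strict Implicit. Unset Printing Implicit Defensive.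
Import Order.TTheory GRing.Theory Num.Theory.
Local Open Scope ring_scope.

Section Routing.
Variables (R : realType) (N L : nat).

(* A routing profile: f i l = flow of user i on link l. *)
Definition profile := 'I_N -> 'I_L -> R.

Definition feasible_strategy (ri : R) (h : 'I_L -> R) : Prop :=
  (forall l, 0 <= h l) /\ \sum_(l < L) h l = ri.

Definition feasible (r : 'I_N -> R) (f : profile) : Prop :=
  forall i, feasible_strategy (r i) (f i).

Definition ftot (f : profile) (l : 'I_L) : R := \sum_(i < N) f i l.

Definition cost (T : 'I_L -> R -> R) (f : profile) (i : 'I_N) : R :=
  \sum_(l < L) f i l * T l (ftot f l).

Definition replace (f : profile) (i : 'I_N) (h : 'I_L -> R) : profile :=
  fun j => if j == i then h else f j.

Definition is_NEP (T : 'I_L -> R -> R) (r : 'I_N -> R) (f : profile) : Prop :=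
  feasible r f /\
  forall i h, feasible_strategy (r i) h ->
    cost T f i <= cost T (replace f i h) i.

Definition Jsys (T : 'I_L -> R -> R) (f : profile) : R :=
  \sum_(i < N) cost T f i.

Definition is_sysopt (T : 'I_L -> R -> R) (r : 'I_N -> R) (f : profile) : Prop :=
  feasible r f /\ forall f', feasible r f' -> Jsys T f <= Jsys T f'.

Definition inG (T : 'I_L -> R -> R) (r : 'I_N -> R) (g : 'I_N -> R) : Prop :=
  exists (M : nat) (p : 'I_M -> R) (fs : 'I_M -> profile),
    (forall m, 0 < p m) /\ \sum_(m < M) p m = 1 /\
    (forall m, feasible r (fs m)) /\
    forall i, g i = \sum_(m < M) p m * cost T (fs m) i.

Definition pareto_N2 (T : 'I_L -> R -> R) (r : 'I_N -> R) (g : 'I_N -> R) : Prop :=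
  ~ exists g', inG T r g' /\ (forall i, g' i <= g i) /\ exists i, g' i < g i.

Definition swap (i k : 'I_N) (g : 'I_N -> R) : 'I_N -> R :=
  fun j => if j == i then g k else if j == k then g i else g j.

Definition symmetry_N3 (T : 'I_L -> R -> R) (r : 'I_N -> R)
    (Jhat : 'I_N -> R) (g : 'I_N -> R) : Prop :=
  forall i k, Jhat i = Jhat k ->
    (forall g', inG T r g' <-> inG T r (swap i k g')) ->
    g i = g k.

Definition is_NBS (T : 'I_L -> R -> R) (r : 'I_N -> R)
    (Jhat : 'I_N -> R) (g : 'I_N -> R) : Prop :=
  inG T r g /\ (forall i, g i <= Jhat i) /\
  forall g', inG T r g' -> (forall i, g' i <= Jhat i) ->
    \prod_(i < N) (Jhat i - g' i) <= \prod_(i < N) (Jhat i - g i).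

End Routing.

Definition nonneg_valued (R : realType) (T : R -> R) : Prop :=
  forall x, 0 <= x -> 0 <= T x.

Definition strictly_increasing_nonneg (R : realType) (T : R -> R) : Prop :=
  forall x y, 0 <= x -> x < y -> T x < T y.

Definition convex_nonneg (R : realType) (T : R -> R) : Prop :=
  forall x y t, 0 <= x -> 0 <= y -> 0 <= t -> t <= 1 ->
    T (t * x + (1 - t) * y) <= t * T x + (1 - t) * T y.

(* Continuously differentiable on [0,oo): there is a derivative dT,
   one-sided (from the right) at 0, two-sided at x > 0, and dT is
   continuous on [0,oo). *)
Definition C1_nonneg (R : realType) (T : R -> R) : Prop :=
  exists dT : R -> R,
    (forall x, 0 <= x -> forall eps, 0 < eps -> exists2 delta, 0 < delta &
       forall h, h != 0 -> `|h| < delta -> 0 <= x + h ->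
         `|(T (x + h) - T x) / h - dT x| < eps) /\
    (forall x, 0 <= x -> forall eps, 0 < eps -> exists2 delta, 0 < delta &
       forall y, 0 <= y -> `|y - x| < delta -> `|dT y - dT x| < eps).

(* Main.v *)
Require Import Defs.
From HB Require Import structures.
From mathcomp Require Import all_boot all_order all_algebra.
From mathcomp Require Import reals.
From mathcomp Require Import all_classical all_reals all_analysis.
From mathcomp Require Import ring lra.
Import Order.TTheory GRing.Theory Num.Theory.
Import numFieldNormedType.Exports.
Local Open Scope ring_scope.
Set Implicit Arguments. Unset Strict Implicit. Unset Printing Implicit Defensive.

Section Helpers.
Local Open Scope classical_set_scope.
Definition posp (R : realType) (x : R) : R := (x + `|x|) / 2.

Lemma posp_ge0 (R : realType) (x : R) : 0 <= posp x.
Proof. rewrite /posp; case: (lerP 0 x) => hx; [rewrite ger0_norm // | rewrite ltr0_norm //]; lra. Qed.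

Lemma posp_id (R : realType) (x : R) : 0 <= x -> posp x = x.
Proof. by move=> hx; rewrite /posp ger0_norm //; field. Qed.

Lemma posp_lip (R : realType) (x y : R) : `|posp y - posp x| <= `|y - x|.
Proof.
rewrite /posp; case: (lerP 0 x) => hx; [rewrite (ger0_norm hx) | rewrite (ltr0_norm hx)];
case: (lerP 0 y) => hy; [rewrite (ger0_norm hy) | rewrite (ltr0_norm hy) | rewrite (ger0_norm hy) | rewrite (ltr0_norm hy)];
rewrite ler_norml; case: (lerP 0 (y - x)) => h; [rewrite (ger0_norm h) | rewrite (ltr0_norm h) | rewrite (ger0_norm h) | rewrite (ltr0_norm h) |
  rewrite (ger0_norm h) | rewrite (ltr0_norm h) | rewrite (ger0_norm h) | rewrite (ltr0_norm h)]; apply/andP; split; lra.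
Qed.

Lemma cont_ext (R : realType) (T : R -> R) :
  (forall x, 0 <= x -> forall eps, 0 < eps -> exists2 delta, 0 < delta &
       forall y, 0 <= y -> `|y - x| < delta -> `|T y - T x| < eps) ->
  continuous (fun x : R => T (posp x)).
Proof.
move=> hT x; apply/cvgrPdist_lt => eps eps0.
have [d d0 hd] := hT (posp x) (posp_ge0 x) eps eps0.
near=> y.
rewrite distrC; apply: hd; first exact: posp_ge0.
apply: le_lt_trans (posp_lip x y) _.
near: y. 
have := @near_ball _ _ x d d0. apply: filterS => y.
by rewrite /ball /= distrC.
Unshelve. all: by end_near.
Qed.

Lemma cont_sum (R : realType) (U : topologicalType) (I : eqType) (s : seq I) (g : I -> U -> R) :
  (forall i, continuous (g i)) -> continuous (fun u => \sum_(i <- s) g i u).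
Proof.
move=> hg; elim: s => [|a s IH].
  have -> : (fun u : U => \sum_(i <- [::]) g i u) = (fun=> 0) by apply/funext => u; rewrite big_nil.
  exact: cst_continuous.
have -> : (fun u : U => \sum_(i <- a :: s) g i u) = (fun u => g a u + \sum_(i <- s) g i u)
  by apply/funext => u; rewrite big_cons.
by move=> u; apply: continuousD; [exact: hg | exact: IH].
Qed.

Lemma ex_min (R : realType) (L : nat) (T : 'I_L -> R -> R) (s : R) :
  0 <= s -> (0 < L)%N ->
  (forall l x, 0 <= x -> forall eps, 0 < eps -> exists2 delta, 0 < delta &
       forall y, 0 <= y -> `|y - x| < delta -> `|T l y - T l x| < eps) ->
  exists x : 'I_L -> R, (forall l, 0 <= x l) /\ \sum_(l < L) x l = s /\
    forall y : 'I_L -> R, (forall l, 0 <= y l) -> \sum_(l < L) y l = s ->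
      \sum_(l < L) x l * T l (x l) <= \sum_(l < L) y l * T l (y l).
Proof.
move=> s0 L0 hT.
pose A := [set v : 'rV[R]_L | (forall l, 0 <= v ord0 l) /\ \sum_(l < L) v ord0 l = s].
pose f := fun v : 'rV[R]_L => \sum_(l < L) v ord0 l * T l (posp (v ord0 l)).
have fc : continuous f.
  apply: cont_sum => l v; apply: continuousM; first exact: coord_continuous.
  apply: (continuous_comp (f := fun v : 'rV[R]_L => v ord0 l) (g := fun x => T l (posp x))).
    exact: coord_continuous.
  have hc := cont_ext (T := T l) (fun x hx eps he => hT l x hx eps he). exact: hc.
have sumc : continuous (fun v : 'rV[R]_L => \sum_(l < L) v ord0 l).
  by apply: cont_sum => l; exact: coord_continuous.
have A0 : A !=set0.
  exists (\row_(l < L) (s / L%:R)); split => [l|]; rewrite ?mxE.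
    by rewrite divr_ge0 // ler0n.
  under eq_bigr do rewrite mxE.
  rewrite sumr_const card_ord -mulr_natr; field.
  by rewrite pnatr_eq0 -lt0n.
have Acl : closed A.
  have -> : A = (\bigcap_(l in setT) [set v : 'rV[R]_L | 0 <= v ord0 l]) `&`
               [set v : 'rV[R]_L | \sum_(l < L) v ord0 l = s].
    apply/seteqP; split => v /=.
      by move=> [h1 h2]; split => //= l _; exact: h1.
    by move=> [h1 h2]; split => // l; exact: h1.
  apply: closedI.
    apply: closed_bigI => l _.
    have h := proj1 (continuous_closedP _) (@coord_continuous R 1 L ord0 l) _ (@closed_ge R 0). exact: h.
  have h := proj1 (continuous_closedP _) sumc _ (@closed_eq R s). exact: h.
have Acp : compact A.
  have hb := @rV_compact R L (fun=> `[0, s]%classic) (fun _ => @segment_compact R 0 s).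
  apply: (subclosed_compact Acl hb).
  move=> v [h1 h2] l /=; rewrite in_itv /= h1 /= -h2.
  rewrite (bigD1 l) //= lerDl; apply: sumr_ge0 => j _; exact: h1.
have [c cA cmin] := compact_EVT_min A0 Acp (continuous_subspaceT fc).
move: (cA); rewrite inE => -[c1 c2].
exists (fun l => c ord0 l); split => //; split => // y y1 y2.
have hA : A (\row_(l < L) y l).
  split => [l|]; rewrite ?mxE //.
  by under eq_bigr do rewrite mxE.
have := cmin _ (mem_set hA); rewrite /f.
have -> : \sum_(l < L) c ord0 l * T l (posp (c ord0 l)) = \sum_(l < L) c ord0 l * T l (c ord0 l).
  by apply: eq_bigr => l _; rewrite posp_id.
have -> // : \sum_(l < L) (\row_(l0 < L) y l0) ord0 l * T l (posp ((\row_(l0 < L) y l0) ord0 l)) = \sum_(l < L) y l * T l (y l).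
by apply: eq_bigr => l _; rewrite mxE posp_id.
Qed.
End Helpers.
Definition derivat (R : realType) (T : R -> R) (x D : R) :=
  forall eps, 0 < eps -> exists2 delta, 0 < delta &
    forall h, h != 0 -> `|h| < delta -> 0 <= x + h -> `|(T (x + h) - T x) / h - D| < eps.

Lemma deriv_bound (R : realType) (T : R -> R) (x D : R) : derivat T x D ->
  forall eta, 0 < eta -> exists2 delta, 0 < delta &
    forall h, `|h| < delta -> 0 <= x + h -> `|T (x + h) - T x - h * D| <= eta * `|h|.
Proof.
move=> hd eta eta0; have [d d0 hdd] := hd eta eta0; exists d => // h hh hxh.
have [->|hn] := eqVneq h 0; first by rewrite addr0 subrr mul0r subr0 !normr0 mulr0.
have -> : T (x + h) - T x - h * D = ((T (x + h) - T x) / h - D) * h by field.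
rewrite normrM; apply: ler_wpM2r; first exact: normr_ge0.
exact: ltW (hdd h hn hh hxh).
Qed.

Lemma D_pos (R : realType) (T : R -> R) (x D : R) :
  strictly_increasing_nonneg T -> convex_nonneg T -> derivat T x D -> 0 < x -> 0 < D.
Proof.
move=> hinc hconv hd x0.
have X0 : T 0 < T x by apply: hinc.
pose sig := (T x - T 0) / x.
have sig0 : 0 < sig by rewrite /sig divr_gt0 // subr_gt0.
rewrite ltNge; apply/negP => D0.
have [d d0 hdd] := hd sig sig0.
pose s := Num.min (d / 2) x.
have s0 : 0 < s by rewrite /s lt_min x0 divr_gt0.
have sx : s <= x by rewrite /s ge_min lexx orbT.
have sd : s < d by rewrite /s gt_min; apply/orP; left; lra.
pose t := (x - s) / x.
have t0 : 0 <= t by rewrite /t divr_ge0 // ?subr_ge0 // ltW.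
have t1 : t <= 1 by rewrite /t ler_pdivrMr // mul1r; lra.
have := hconv x 0 t (ltW x0) (lexx 0) t0 t1.
rewrite mulr0 addr0.
have -> : t * x = x - s by rewrite /t; field; rewrite gt_eqF.
move=> hc.
have hn : - s != 0 by rewrite oppr_eq0 gt_eqF.
have := hdd (- s) hn; rewrite normrN gtr0_norm // => /(_ sd).
have xs0 : 0 <= x + - s by lra.
move=> /(_ xs0).
have e1 : (T (x - s) - T x) / - s = (T x - T (x - s)) / s by field; rewrite gt_eqF.
rewrite e1.
have hq : sig <= (T x - T (x - s)) / s.
  rewrite ler_pdivlMr // /sig.
  have : T x - T (x - s) >= (s / x) * (T x - T 0).
    have -> : (s / x) * (T x - T 0) = T x - (t * T x + (1 - t) * T 0).
      have -> : s / x = 1 - t by rewrite /t; field; rewrite gt_eqF.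
      ring.
    lra.
  have -> : s / x * (T x - T 0) = (T x - T 0) / x * s by field; rewrite gt_eqF.
  done.
move=> h; have := le_lt_trans (ler_norm _) h; lra.
Qed.
Lemma link_bound (R : realType) (a b e D T0 r1 r2 eta : R) :
 0 <= a -> 0 <= b -> 0 < e -> e <= 1 -> 0 <= eta ->
 `|r1| <= eta * (e * (a + b)) -> `|r2| <= eta * (e * (a + b)) ->
 (a + e * (b - a)) * (T0 + e * (b - a) * D + r1) - a * T0 +
 ((b - e * (b - a)) * (T0 - e * (b - a) * D + r2) - b * T0)
   <= - (e * ((b - a) ^+ 2 * D)) + 2 * e ^+ 2 * ((b - a) ^+ 2 * D) + 2 * (eta * e) * (a + b) ^+ 2.
Proof.
move=> a0 b0 e0 e1 eta0; rewrite !ler_norml => /andP[h1 h1'] /andP[h2 h2'].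
set X := eta * (e * (a + b)).
have X0 : 0 <= X by rewrite /X mulr_ge0 // mulr_ge0 // ?addr_ge0 // ltW.
set u := a + e * (b - a); set v := b - e * (b - a).
have u0 : 0 <= u by rewrite /u; nra.
have v0 : 0 <= v by rewrite /v; nra.
have ub : u <= a + b by rewrite /u; nra.
have vb : v <= a + b by rewrite /v; nra.
have k1 : u * r1 <= (a + b) * X.
  apply: le_trans (_ : u * X <= _); [exact: ler_wpM2l | exact: ler_wpM2r].
have k2 : v * r2 <= (a + b) * X.
  apply: le_trans (_ : v * X <= _); [exact: ler_wpM2l | exact: ler_wpM2r].
have -> : u * (T0 + e * (b - a) * D + r1) - a * T0 + (v * (T0 - e * (b - a) * D + r2) - b * T0)
  = - (e * ((b - a) ^+ 2 * D)) + 2 * e ^+ 2 * ((b - a) ^+ 2 * D) + (u * r1 + v * r2).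
  by rewrite /u /v; ring.
have -> : 2 * (eta * e) * (a + b) ^+ 2 = (a + b) * X + (a + b) * X by rewrite /X; ring.
lra.
Qed.

Lemma key (R : realType) (L : nat) (a b F D : 'I_L -> R) (T : 'I_L -> R -> R) :
 (forall l, 0 <= a l) -> (forall l, 0 <= b l) -> (forall l, a l <= F l) -> (forall l, b l <= F l) ->
 (forall l, derivat (T l) (F l) (D l)) ->
 0 < \sum_(l < L) (b l - a l) ^+ 2 * D l ->
 (forall e, 0 < e -> e <= 1 -> 0 <= \sum_(l < L)
    ((a l + e * (b l - a l)) * T l (F l + e * (b l - a l)) - a l * T l (F l) +
     ((b l - e * (b l - a l)) * T l (F l - e * (b l - a l)) - b l * T l (F l)))) ->
 False.
Proof.
move=> a0 b0 aF bF hd.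
set c := \sum_(l < L) _ => c0 hE.
set B := \sum_(l < L) (a l + b l) ^+ 2.
have B0 : 0 <= B by apply: sumr_ge0 => l _; exact: sqr_ge0.
pose eta := c / (8 * (B + 1)).
have eta0 : 0 < eta by rewrite /eta divr_gt0 // mulr_gt0 // ltr_wpDl.
have etaB : eta * B <= c / 8.
  have ee : eta * (8 * (B + 1)) = c.
    by rewrite /eta mulrC mulrA [_ * c]mulrC -mulrA mulfV ?mulr1 // mulf_neq0 // gt_eqF // ltr_wpDl.
  nra.
have /fin_all_exists [dl hdl] : forall l, exists dl : R, 0 < dl /\ forall h, `|h| < dl ->
    0 <= F l + h -> `|T l (F l + h) - T l (F l) - h * D l| <= eta * `|h|.
  move=> l; have [d d0 hdd] := deriv_bound (hd l) eta0; by exists d.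
pose S := \sum_(l < L) (a l + b l + 1) / dl l.
have S0 : 0 <= S.
  apply: sumr_ge0 => l _; apply: divr_ge0; first by rewrite addr_ge0 // addr_ge0.
  exact: ltW (proj1 (hdl l)).
pose e := (2 * (S + 4))^-1.
have eS : e * (2 * (S + 4)) = 1 by rewrite /e mulVf // mulf_neq0 // gt_eqF // ltr_wpDl.
have e0 : 0 < e by rewrite /e invr_gt0 mulr_gt0 // ltr_wpDl.
have e8 : e <= 1 / 8 by nra.
have edl : forall l, e * (a l + b l + 1) < dl l.
  move=> l; have [d0 _] := hdl l.
  have q : (a l + b l + 1) / dl l <= S.
    rewrite /S (bigD1 l) //= lerDl; apply: sumr_ge0 => j _; apply: divr_ge0.
      by rewrite addr_ge0 // addr_ge0.
    exact: ltW (proj1 (hdl j)).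
  move: q; rewrite ler_pdivrMr // => q.
  have : e * (a l + b l + 1) <= e * (S * dl l) by rewrite ler_pM2l.
  nra.
have := hE e e0 (le_trans e8 (ltW _)).
move=> /(_ ltac:(lra)) hpos.
suff : \sum_(l < L)
    ((a l + e * (b l - a l)) * T l (F l + e * (b l - a l)) - a l * T l (F l) +
     ((b l - e * (b l - a l)) * T l (F l - e * (b l - a l)) - b l * T l (F l)))
   <= - (e * c) + 2 * e ^+ 2 * c + 2 * (eta * e) * B.
  have ec : e * c <= 1 / 8 * c by rewrite ler_pM2r.
  have inner : - c + 2 * (e * c) + 2 * (eta * B) < 0 by lra.
  have -> : - (e * c) + 2 * e ^+ 2 * c + 2 * (eta * e) * B = e * (- c + 2 * (e * c) + 2 * (eta * B)) by ring.
  have : e * (- c + 2 * (e * c) + 2 * (eta * B)) < 0 by rewrite pmulr_rlt0.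
  lra.
have -> : - (e * c) + 2 * e ^+ 2 * c + 2 * (eta * e) * B =
   \sum_(l < L) (- (e * ((b l - a l) ^+ 2 * D l)) + 2 * e ^+ 2 * ((b l - a l) ^+ 2 * D l)
                 + 2 * (eta * e) * (a l + b l) ^+ 2).
  by rewrite !big_split /= sumrN -!mulr_sumr.
apply: ler_sum => l _.
have [d0 hb] := hdl l.
have hab : `|e * (b l - a l)| <= e * (a l + b l).
  rewrite normrM gtr0_norm // ler_pM2l // ler_norml; apply/andP; split.
    by have := a0 l; have := b0 l; lra.
  by have := a0 l; have := b0 l; lra.
have hlt : e * (a l + b l) < dl l by have := edl l; have := e0; lra.
have h1 := hb (e * (b l - a l)) (le_lt_trans hab hlt).
have hlt2 : `|- (e * (b l - a l))| < dl l by rewrite normrN; exact: le_lt_trans hab hlt.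
have h2 := hb _ hlt2.
have p1 : 0 <= F l + e * (b l - a l).
  have := aF l; have := b0 l; have := a0 l; nra.
have p2 : 0 <= F l + - (e * (b l - a l)).
  have := bF l; have := b0 l; have := a0 l; nra.
move: (h1 p1) (h2 p2); rewrite normrN.
set r1 := T l (F l + e * (b l - a l)) - T l (F l) - e * (b l - a l) * D l.
set r2 := T l (F l + - (e * (b l - a l))) - T l (F l) - - (e * (b l - a l)) * D l.
move=> k1 k2.
have k1' : `|r1| <= eta * (e * (a l + b l)) by apply: le_trans k1 _; rewrite ler_pM2l.
have k2' : `|r2| <= eta * (e * (a l + b l)) by apply: le_trans k2 _; rewrite ler_pM2l.
have -> : T l (F l + e * (b l - a l)) = T l (F l) + e * (b l - a l) * D l + r1 by rewrite /r1; ring.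
have -> : T l (F l - e * (b l - a l)) = T l (F l) - e * (b l - a l) * D l + r2 by rewrite /r2; ring.
apply: (link_bound _ _ (a0 l) (b0 l) e0 _ (ltW eta0) k1' k2'); lra.
Qed.
Lemma ftot_replace (R : realType) N L (f : profile R N L) i h l :
  ftot (replace f i h) l = ftot f l - f i l + h l.
Proof.
rewrite /ftot (bigD1 i) //= [in RHS](bigD1 i) //= /replace eqxx.
have -> : \sum_(j < N | j != i) (if j == i then h else f j) l = \sum_(j < N | j != i) f j l.
  by apply: eq_bigr => j /negbTE ->.
ring.
Qed.

Lemma ftot_ge (R : realType) N L (r : 'I_N -> R) (f : profile R N L) i l :
  feasible r f -> f i l <= ftot f l.
Proof.
move=> hf; rewrite /ftot (bigD1 i) //= lerDl; apply: sumr_ge0 => j _.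
exact: (proj1 (hf j)).
Qed.

Lemma nep_sym (R : realType) N L (r : 'I_N -> R) (T : 'I_L -> R -> R) (fhat : profile R N L) :
  (forall l, strictly_increasing_nonneg (T l) /\ convex_nonneg (T l) /\ C1_nonneg (T l)) ->
  is_NEP T r fhat -> forall i k, r i = r k -> forall l, fhat i l = fhat k l.
Proof.
move=> hT [feas hN] i k rik.
have /fin_all_exists [dT hdT] : forall l, exists dT : R -> R,
    forall x, 0 <= x -> derivat (T l) x (dT x).
  by move=> l; have [_ [_ [dT [h _]]]] := hT l; exists dT.
set a := fhat i; set b := fhat k; set F := ftot fhat.
have a0 : forall l, 0 <= a l by move=> l; exact: (proj1 (feas i)).
have b0 : forall l, 0 <= b l by move=> l; exact: (proj1 (feas k)).
have aF : forall l, a l <= F l by move=> l; exact: ftot_ge.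
have bF : forall l, b l <= F l by move=> l; exact: ftot_ge.
have F0 : forall l, 0 <= F l by move=> l; exact: le_trans (a0 l) (aF l).
have Fpos : forall l, a l != b l -> 0 < F l.
  move=> l ne; rewrite lt_neqAle F0 andbT; apply/negP => /eqP F0'.
  move: ne (a0 l) (b0 l) (aF l) (bF l); rewrite -F0' => /negP ne ha hb haF hbF; apply: ne.
  apply/eqP; lra.
move=> l0; apply/eqP; apply/negP => hne.
have hne' : a l0 != b l0 by apply/negP.
apply: (@key R L a b F (fun l => dT l (F l)) T a0 b0 aF bF).
- by move=> l; exact: hdT.
- rewrite (bigD1 l0) //=; apply: ltr_pwDl.
    apply: mulr_gt0; first by rewrite lt0r sqr_ge0 andbT sqrf_eq0 subr_eq0; apply/eqP => e; apply: hne; rewrite e.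
    have [hi [hc _]] := hT l0; move: (D_pos hi hc (hdT l0 _ (F0 l0)) (Fpos l0 hne')); exact.
  apply: sumr_ge0 => l _.
  have [->|ne] := eqVneq (a l) (b l); first by rewrite subrr expr0n /= mul0r.
  apply: mulr_ge0; first exact: sqr_ge0.
  have [hi [hc _]] := hT l; exact: ltW (D_pos hi hc (hdT l _ (F0 l)) (Fpos l ne)).
move=> e e0 e1.
pose h := fun l => a l + e * (b l - a l).
pose h' := fun l => b l - e * (b l - a l).
have fh : feasible_strategy (r i) h.
  split => [l|]; first by rewrite /h; have := a0 l; have := b0 l; nra.
  rewrite /h big_split /= -mulr_sumr sumrB.
  have -> : \sum_(l < L) a l = r i by exact: (proj2 (feas i)).
  have -> : \sum_(l < L) b l = r k by exact: (proj2 (feas k)).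
  by rewrite rik subrr mulr0 addr0.
have fh' : feasible_strategy (r k) h'.
  split => [l|]; first by rewrite /h'; have := a0 l; have := b0 l; nra.
  rewrite /h' sumrB -mulr_sumr sumrB.
  have -> : \sum_(l < L) a l = r i by exact: (proj2 (feas i)).
  have -> : \sum_(l < L) b l = r k by exact: (proj2 (feas k)).
  by rewrite rik subrr mulr0 subr0.
have Hi := hN i h fh; have Hk := hN k h' fh'.
move: Hi Hk; rewrite /cost.
have -> : \sum_(l < L) replace fhat i h i l * T l (ftot (replace fhat i h) l) =
   \sum_(l < L) (a l + e * (b l - a l)) * T l (F l + e * (b l - a l)).
  apply: eq_bigr => l _; rewrite ftot_replace /replace eqxx /h /F /a; congr (_ * T l _); ring.
have -> : \sum_(l < L) replace fhat k h' k l * T l (ftot (replace fhat k h') l) =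
   \sum_(l < L) (b l - e * (b l - a l)) * T l (F l - e * (b l - a l)).
  apply: eq_bigr => l _; rewrite ftot_replace /replace eqxx /h' /F /b; congr (_ * T l _); rewrite /a; ring.
move=> Hi Hk.
rewrite big_split /= !sumrB.
move: Hi Hk; rewrite /a /b /F; lra.
Qed.

Lemma cont_from_deriv (R : realType) (T dT : R -> R) :
  (forall x, 0 <= x -> derivat T x (dT x)) ->
  forall x, 0 <= x -> forall eps, 0 < eps -> exists2 delta, 0 < delta &
       forall y, 0 <= y -> `|y - x| < delta -> `|T y - T x| < eps.
Proof.
move=> hd x x0 eps eps0.
have [d d0 hb] := deriv_bound (hd x x0) (ltr01 : (0:R) < 1).
set K := `|dT x| + 1.
have K0 : 0 < K by rewrite /K ltr_wpDl.
exists (Num.min d (eps / K)); first by rewrite lt_min d0 divr_gt0.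
move=> y y0; rewrite lt_min => /andP[yd ye].
have exy : x + (y - x) = y by ring.
have := hb (y - x); rewrite exy => /(_ yd y0).
rewrite mul1r => hh.
have : `|T y - T x| <= `|y - x| * K.
  have -> : T y - T x = (T y - T x - (y - x) * dT x) + (y - x) * dT x by ring.
  apply: le_trans (ler_normD _ _) _.
  rewrite normrM /K mulrDr mulr1; lra.
move: ye; rewrite ltr_pdivlMr // => ye; lra.
Qed.

Lemma Jsys_tot (R : realType) N L (T : 'I_L -> R -> R) (f : profile R N L) :
  Jsys T f = \sum_(l < L) ftot f l * T l (ftot f l).
Proof.
rewrite /Jsys /cost exchange_big; apply: eq_bigr => l _; by rewrite /ftot mulr_suml.
Qed.

Lemma feasible_tot (R : realType) N L (r : 'I_N -> R) (f : profile R N L) :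
  feasible r f -> (forall l, 0 <= ftot f l) /\ \sum_(l < L) ftot f l = \sum_(i < N) r i.
Proof.
move=> hf; split.
  by move=> l; apply: sumr_ge0 => i _; exact: (proj1 (hf i)).
rewrite /ftot exchange_big; apply: eq_bigr => i _; exact: (proj2 (hf i)).
Qed.

Lemma inG_ext (R : realType) N L (T : 'I_L -> R -> R) (r : 'I_N -> R) (g g' : 'I_N -> R) :
  (forall i, g i = g' i) -> inG T r g -> inG T r g'.
Proof.
move=> e [M [p [fs [h1 [h2 [h3 h4]]]]]]; exists M, p, fs; split => //; split => //; split => // i.
by rewrite -e.
Qed.

Definition sg N (i k : 'I_N) (j : 'I_N) := if j == i then k else if j == k then i else j.

Lemma sgK N (i k : 'I_N) : involutive (sg i k).
Proof.
move=> j; rewrite /sg.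
have [-> | ji] := eqVneq j i.
  rewrite ?eqxx; have [-> | ki] := eqVneq k i; first by rewrite ?eqxx.
  by rewrite ?(negbTE ki) ?eqxx.
have [-> | jk] := eqVneq j k.
  by rewrite ?(negbTE ji) ?eqxx.
by rewrite ?(negbTE ji) ?(negbTE jk) ?(negbTE ji) ?(negbTE jk).
Qed.
Lemma inG_swap1 (R : realType) N L (T : 'I_L -> R -> R) (r : 'I_N -> R) (g : 'I_N -> R) i k :
  (forall i j, r i = r j) -> inG T r g -> inG T r (swap i k g).
Proof.
move=> rc [M [p [fs [h1 [h2 [h3 h4]]]]]].
exists M, p, (fun m j => fs m (sg i k j)); split => //; split => //; split.
  by move=> m j; rewrite (rc j (sg i k j)); exact: h3.
move=> j.
have -> : swap i k g j = g (sg i k j) by rewrite /swap /sg; case: (j == i) => //; case: (j == k).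
rewrite h4; apply: eq_bigr => m _; congr (_ * _).
rewrite /cost; apply: eq_bigr => l _; congr (_ * T l _).
rewrite /ftot (reindex_inj (inv_inj (sgK i k))) /=.
done.
Qed.

Lemma swapK N (R : realType) (i k : 'I_N) (g : 'I_N -> R) j : swap i k (swap i k g) j = g j.
Proof.
rewrite /swap.
have [-> | ji] := eqVneq j i.
  rewrite ?eqxx; have [-> | ki] := eqVneq k i; first by rewrite ?eqxx.
  by rewrite ?(negbTE ki) ?eqxx.
have [-> | jk] := eqVneq j k.
  by rewrite ?(negbTE ji) ?eqxx.
by rewrite ?(negbTE ji) ?(negbTE jk).
Qed.

Lemma inG_swap (R : realType) N L (T : 'I_L -> R -> R) (r : 'I_N -> R) i k :
  (forall i j, r i = r j) -> forall g, inG T r g <-> inG T r (swap i k g).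
Proof.
move=> rc g; split; first exact: inG_swap1.
move=> h; apply: inG_ext (inG_swap1 i k rc h) => j; exact: swapK.
Qed.

Lemma sumG (R : realType) N L (T : 'I_L -> R -> R) (r : 'I_N -> R) (g : 'I_N -> R) (phi : R) :
  (forall f, feasible r f -> phi <= Jsys T f) -> inG T r g -> phi <= \sum_(i < N) g i.
Proof.
move=> hphi [M [p [fs [h1 [h2 [h3 h4]]]]]].
under eq_bigr do rewrite h4.
rewrite exchange_big /=.
have -> : phi = \sum_(m < M) p m * phi by rewrite -mulr_suml h2 mul1r.
apply: ler_sum => m _; rewrite -mulr_sumr ler_pM2l //; exact: hphi.
Qed.
Lemma agm (R : realType) N (E : 'I_N -> R) : (forall i, 0 <= E i) ->
  \prod_(i < N) E i <= ((\sum_(i < N) E i) / N%:R) ^+ N ?= iff [forall i, forall j, E i == E j].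
Proof.
move=> h.
have := @leif_AGM R _ (mem 'I_N) E (fun i _ => h i).
rewrite card_ord.
have -> : [forall i in 'I_N, forall j in 'I_N, E i == E j] = [forall i, forall j, E i == E j] by [].
done.
Qed.

Theorem theorem3p3 (R : realType) (N L : nat) (r : 'I_N -> R)
    (T : 'I_L -> R -> R) (fhat : profile R N L) :
  (0 < N)%N -> (0 < L)%N ->
  (forall i, 0 < r i) ->
  (forall i, r i = (\sum_(j < N) r j) / N%:R) ->
  (forall l, nonneg_valued (T l) /\ strictly_increasing_nonneg (T l) /\
             convex_nonneg (T l) /\ C1_nonneg (T l)) ->
  is_NEP T r fhat ->
  (* (1) at most one g in G satisfying N2 and N3 *)
  (forall g1 g2 : 'I_N -> R,
     inG T r g1 -> pareto_N2 T r g1 -> symmetry_N3 T r (cost T fhat) g1 ->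
     inG T r g2 -> pareto_N2 T r g2 -> symmetry_N3 T r (cost T fhat) g2 ->
     forall i, g1 i = g2 i) /\
  (* (2) the NBS exists; PoS = 1; and it is the cost vector of a single
     feasible, system-optimal routing profile *)
  (exists g, is_NBS T r (cost T fhat) g) /\
  (forall g, is_NBS T r (cost T fhat) g ->
     (forall fstar, is_sysopt T r fstar ->
        (\sum_(i < N) g i) / Jsys T fstar = 1) /\
     exists f, is_sysopt T r f /\ forall i, g i = cost T f i).
Proof.
move=> hN hL rpos req hT hnep.
set Rt := \sum_(j < N) r j.
pose i0 : 'I_N := Ordinal hN.
have Nr0 : (N%:R : R) != 0 by rewrite pnatr_eq0 -lt0n.
have Nr0' : (0 : R) < N%:R by rewrite ltr0n.
have Rt0 : 0 < Rt.
  rewrite /Rt (bigD1 i0) //= ltr_pwDl //; apply: sumr_ge0 => j _; exact: ltW.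
have rc : forall i j, r i = r j by move=> i j; rewrite (req i) (req j).
have hT' : forall l, strictly_increasing_nonneg (T l) /\ convex_nonneg (T l) /\ C1_nonneg (T l).
  by move=> l; have [_ h] := hT l.
have /fin_all_exists [dT hdT] : forall l, exists dT : R -> R,
    forall x, 0 <= x -> derivat (T l) x (dT x).
  by move=> l; have [_ [_ [dT [h _]]]] := hT' l; exists dT.
have [x [x0 [xs xmin]]] := ex_min (ltW Rt0) hL (fun l => cont_from_deriv (hdT l)).
set Phi := \sum_(l < L) x l * T l (x l).
pose fstar : profile R N L := fun i l => x l / N%:R.
have ftot_star : forall l, ftot fstar l = x l.
  by move=> l; rewrite /ftot /fstar sumr_const card_ord -mulr_natr; field.
have feas_star : feasible r fstar.
  move=> i; split => [l|]; first by rewrite /fstar divr_ge0 // ler0n.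
  by rewrite /fstar -mulr_suml xs (req i).
have Jstar : Jsys T fstar = Phi.
  by rewrite Jsys_tot; apply: eq_bigr => l _; rewrite ftot_star.
have Jlow : forall f, feasible r f -> Phi <= Jsys T f.
  move=> f hf; rewrite Jsys_tot; have [h1 h2] := feasible_tot hf.
  by apply: xmin => //; rewrite h2.
have sysopt_star : is_sysopt T r fstar by split => // f' hf'; rewrite Jstar; exact: Jlow.
have cost_star : forall i, cost T fstar i = Phi / N%:R.
  move=> i; rewrite /cost /Phi mulr_suml; apply: eq_bigr => l _.
  by rewrite ftot_star /fstar mulrAC.
have Phi0 : 0 < Phi.
  case: (boolP [exists l, 0 < x l]) => [/existsP[l xl] | /existsPn hn].
    rewrite /Phi (bigD1 l) //= ltr_pwDl //.
      apply: mulr_gt0 => //; have [hnn [hi _]] := hT l.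
      exact: le_lt_trans (hnn 0 (lexx 0)) (hi 0 (x l) (lexx 0) xl).
    apply: sumr_ge0 => j _; apply: mulr_ge0 => //; have [hnn _] := hT j; exact: hnn.
  have : \sum_(l < L) x l <= 0.
    apply: sumr_le0 => l _; have := hn l; rewrite -leNgt; done.
  by rewrite xs; move: Rt0; rewrite /Rt; lra.
have fhat_feas : feasible r fhat by case: hnep.
set c0 := cost T fhat i0.
have Jhat_c : forall i, cost T fhat i = c0.
  move=> i; have e := nep_sym hT' hnep (rc i i0).
  by rewrite /c0 /cost; apply: eq_bigr => l _; rewrite e.
have hJ : Jsys T fhat = N%:R * c0.
  rewrite /Jsys (eq_bigr (fun=> c0)); last by move=> i _; exact: Jhat_c.
  by rewrite sumr_const card_ord mulr_natl.
have Nc0 : Phi <= N%:R * c0 by rewrite -hJ; exact: Jlow.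
set s := c0 - Phi / N%:R.
have s0 : 0 <= s by rewrite /s subr_ge0 ler_pdivrMr // mulrC.
pose gs := fun _ : 'I_N => Phi / N%:R.
have gstar_in : inG T r gs.
  exists 1%N, (fun _ => 1), (fun _ => fstar); split; first by move=> _; exact: ltr01.
  split; first by rewrite big_ord1.
  split; first by move=> _.
  by move=> i; rewrite big_ord1 mul1r cost_star.
have sumg : forall g, inG T r g -> Phi <= \sum_(i < N) g i by move=> g; exact: sumG.
have nbs_gs : is_NBS T r (cost T fhat) gs.
  split => //; split; first by move=> i; rewrite Jhat_c /gs; move: s0; rewrite /s; lra.
  move=> g' hg' hle.
  under eq_bigr do rewrite Jhat_c.
  have -> : \prod_(i < N) (cost T fhat i - gs i) = s ^+ N.
    rewrite (eq_bigr (fun=> s)); last by move=> i _; rewrite Jhat_c.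
    have -> : \prod_(i < N) s = \prod_(i in mem 'I_N) s by [].
    by rewrite prodr_const card_ord.
  have hE : forall i, 0 <= c0 - g' i by move=> i; rewrite subr_ge0 -(Jhat_c i).
  apply: le_trans (agm hE).1 _.
  apply: lerXn2r.
  - by rewrite nnegrE divr_ge0 ?ler0n //; apply: sumr_ge0 => i _; exact: hE.
  - by rewrite nnegrE.
  rewrite sumrB sumr_const card_ord ler_pdivrMr //.
  have e : s * N%:R = N%:R * c0 - Phi by rewrite /s; field.
  have e2 : c0 *+ N = N%:R * c0 by rewrite mulr_natl.
  rewrite e2 e; have := sumg _ hg'; lra.
have nbs_uniq : forall g, is_NBS T r (cost T fhat) g -> forall i, g i = Phi / N%:R.
  move=> g [hg [hle hmax]].
  have hE : forall i, 0 <= c0 - g i by move=> i; rewrite subr_ge0 -(Jhat_c i).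
  have hsum : \sum_(i < N) (c0 - g i) <= N%:R * s.
    rewrite sumrB sumr_const card_ord.
    have e : N%:R * s = N%:R * c0 - Phi by rewrite /s; field.
    have e2 : c0 *+ N = N%:R * c0 by rewrite mulr_natl.
    rewrite e2.
    rewrite e; have := sumg _ hg; lra.
  have [s00|spos] := eqVneq s 0.
    have hz : \sum_(i < N) (c0 - g i) = 0.
      apply/eqP; rewrite eq_le sumr_ge0 // andbT; by move: hsum; rewrite s00 mulr0.
    move=> i; have := @psumr_eq0P _ _ xpredT (fun i => c0 - g i) (fun i _ => hE i) hz i.
    move: s00; rewrite /s; lra.
  have sp : 0 < s by rewrite lt0r spos s0.
  have gsle : forall i, gs i <= cost T fhat i by case: nbs_gs => _ [].
  have hp := hmax _ gstar_in gsle.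
  have hp' : s ^+ N <= \prod_(i < N) (c0 - g i).
    have <- : \prod_(i < N) (cost T fhat i - gs i) = s ^+ N.
      rewrite (eq_bigr (fun=> s)); last by move=> i _; rewrite Jhat_c.
      have -> : \prod_(i < N) s = \prod_(i in mem 'I_N) s by [].
      by rewrite prodr_const card_ord.
    have <- : \prod_(i < N) (cost T fhat i - g i) = \prod_(i < N) (c0 - g i).
      by apply: eq_bigr => i _; rewrite Jhat_c.
    exact: hp.
  have hagm := agm hE.
  set mu := (\sum_(i < N) (c0 - g i)) / N%:R in hagm.
  have mu0 : 0 <= mu by rewrite /mu divr_ge0 ?ler0n //; apply: sumr_ge0 => i _; exact: hE.
  have mus : mu <= s by rewrite /mu ler_pdivrMr // mulrC.
  have muN : mu ^+ N <= s ^+ N by apply: lerXn2r; rewrite ?nnegrE.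
  have pe : \prod_(i < N) (c0 - g i) == mu ^+ N.
    rewrite eq_le hagm.1 /=; exact: le_trans muN hp'.
  rewrite hagm.2 in pe.
  have eqall : forall i, c0 - g i = c0 - g i0.
    by move=> i; move/forallP: pe => /(_ i) /forallP /(_ i0) /eqP.
  have hmu : mu = c0 - g i0.
    rewrite /mu (eq_bigr (fun=> c0 - g i0)); last by move=> i _; exact: eqall.
    by rewrite sumr_const card_ord -mulr_natr; field.
  have mueq : mu = s.
    apply/eqP; rewrite -(@eqrXn2 _ N mu s hN mu0 s0) eq_le muN /=.
    apply: le_trans hp' _; exact: hagm.1.
  move=> i; have := eqall i; rewrite -hmu mueq /s; lra.
have sym_val : forall g, inG T r g -> pareto_N2 T r g -> symmetry_N3 T r (cost T fhat) g ->
    forall i, g i = Phi / N%:R.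
  move=> g hg hp hs.
  have hc : forall i, g i = g i0.
    move=> i; apply: hs; first by rewrite !Jhat_c.
    exact: (@inG_swap R N L T r i i0 rc).
  have hsum := sumg _ hg.
  rewrite (eq_bigr (fun=> g i0)) in hsum; last by move=> i _; exact: hc.
  rewrite sumr_const card_ord -mulr_natr in hsum.
  have lo : Phi / N%:R <= g i0 by rewrite ler_pdivrMr.
  have hi : g i0 <= Phi / N%:R.
    rewrite leNgt; apply/negP => hlt; apply: hp.
    exists gs; split => //; split; first by move=> i; rewrite hc /gs; exact: ltW hlt.
    by exists i0.
  by move=> i; rewrite hc; apply/eqP; rewrite eq_le hi lo.
split.
  move=> g1 g2 hg1 hp1 hs1 hg2 hp2 hs2 i.
  by rewrite (sym_val _ hg1 hp1 hs1) (sym_val _ hg2 hp2 hs2).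
split; first by exists gs.
move=> g hg; have hv := nbs_uniq g hg; split.
  move=> f' [hf' hmin'].
  have Jf : Jsys T f' = Phi.
    apply/eqP; rewrite eq_le Jlow // andbT -Jstar; exact: hmin'.
  rewrite Jf (eq_bigr (fun=> Phi / N%:R)); last by move=> i _; exact: hv.
  rewrite sumr_const card_ord -mulr_natr; field.
  by rewrite (gt_eqF Phi0) Nr0.
exists fstar; split => // i; by rewrite hv cost_star.
Qed.
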